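(* Let $L\in\mathbb{R}^{N\times N}$ be invertible, $C=LL^T$, and let $D$ be the diagonal matrix with $D_{ii}=\sqrt{C_{ii}}$. Let $D_{opt}$ be an invertible diagonal matrix minimizing $\kappa(G^{-1}L)$ over all invertible diagonal matrices $G$. Then $$\kappa(D^{-1}L)\le\sqrt{N}\,\kappa(D_{opt}^{-1}L).$$ Furthermore, if at most $K$ entries in each row of $LL^T$ are nonzero, then $$\kappa(D^{-1}L)\le\sqrt{K}\,\kappa(D_{opt}^{-1}L).$$
   Context: For an invertible matrix $B\in\mathbb{R}^{N\times N}$, $\kappa(B):=\|B\|_2\,\|B^{-1}\|_{S^4}$, where $\|\cdot\|_2$ is the spectral norm and $\|A\|_{S^4}:=\left(\sum_{n} s_n^4\right)^{1/4}$ with $s_n$ the singular values of $A$ (fourth Schatten norm). *)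

(* Defs.v *)
From HB Require Import structures.
From mathcomp Require Import all_boot all_order all_algebra.
From mathcomp Require Import reals.
From Stdlib Require Import ClassicalEpsilon.
Set Implicit Arguments. Unset Strict Implicit. Unset Printing Implicit Defensive.
Import Order.TTheory GRing.Theory Num.Theory.
Local Open Scope ring_scope.

Section Defs.
Variable R : realType.

(* s is a (multiset) list of the singular values of A: the nonnegative
   square roots of the eigenvalues (with multiplicity) of A^T A. *)
Definition is_singular_values (N : nat) (A : 'M[R]_N) (s : 'I_N -> R) : Prop :=
  (forall i, 0 <= s i) /\
  char_poly (A^T *m A) = \prod_(i < N) ('X - ((s i) ^+ 2)%:P).

(* a choice of the singular values (they exist since A^T A is symmetric psd) *)
Definition singvals (N : nat) (A : 'M[R]_N) : 'I_N -> R :=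
  epsilon (inhabits (fun _ : 'I_N => 0)) (is_singular_values A).

Definition spec_norm (N : nat) (A : 'M[R]_N) : R :=
  \big[Num.max/0]_(i < N) singvals A i.

Definition schatten4 (N : nat) (A : 'M[R]_N) : R :=
  Num.sqrt (Num.sqrt (\sum_(i < N) (singvals A i) ^+ 4)).

Definition kappa (N : nat) (B : 'M[R]_N) : R :=
  spec_norm B * schatten4 (invmx B).

Definition inv_diag (N : nat) (G : 'M[R]_N) : Prop :=
  exists d : 'rV[R]_N, G = diag_mx d /\ forall i, d 0 i != 0.

End Defs.

(* Main.v *)
Require Import Defs.
From HB Require Import structures.
From mathcomp Require Import all_boot all_order all_algebra.
From mathcomp Require Import reals complex ring lra.
From Stdlib Require Import ClassicalEpsilon.
Import Order.TTheory GRing.Theory Num.Theory.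
Local Open Scope ring_scope.
Set Implicit Arguments. Unset Strict Implicit. Unset Printing Implicit Defensive.


Lemma char_poly_conj (F : fieldType) n (P B : 'M[F]_n) : P \in unitmx ->
  char_poly (invmx P *m B *m P) = char_poly B.
Proof.
move=> Pu; rewrite /char_poly /char_poly_mx.
have QQ : map_mx polyC (invmx P) *m map_mx polyC P = 1%:M.
  by rewrite -map_mxM mulVmx // map_mx1.
have -> : 'X%:M - map_mx polyC (invmx P *m B *m P) =
   map_mx polyC (invmx P) *m ('X%:M - map_mx polyC B) *m map_mx polyC P.
  rewrite !map_mxM mulmxBr mulmxBl; congr (_ - _).
  by rewrite mul_mx_scalar -scalemxAl QQ scalemx1.
rewrite !det_mulmx mulrC mulrA -det_mulmx.
by rewrite -map_mxM mulmxV // map_mx1 det1 mul1r.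
Qed.

Lemma char_poly_diag (F : comNzRingType) n (e : 'rV[F]_n) :
  char_poly (diag_mx e) = \prod_j ('X - (e 0 j)%:P).
Proof.
rewrite char_poly_trig ?diag_mx_is_trig //.
by apply: eq_bigr => j _; rewrite mxE eqxx mulr1n.
Qed.

Section S.
Variable R : realType.
Local Notation C := (R[i]).
Local Notation cR := (real_complex R).
Local Notation mc M := (map_mx cR M).

Lemma cR_le (x y : R) : (cR x <= cR y) = (x <= y).
Proof. exact: lecR. Qed.

Lemma cR_real (x : R) : cR x \is Num.real.
Proof.
rewrite realE -(rmorph0 cR) !cR_le; exact: le_total.
Qed.

Lemma cR_inj : injective cR.
Proof. exact: complexI. Qed.

Lemma cR_Re (z : C) : z \is Num.real -> cR (complex.Re z) = z.
Proof. exact: RRe_real. Qed.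

Lemma spec_decomp n (A : 'M[R]_n) : exists (P : 'M[C]_n) (d : 'rV[R]_n),
  P \is unitarymx /\ mc (A^T *m A) = invmx P *m diag_mx (mc d) *m P.
Proof.
set Mc := mc (A^T *m A).
have herm : Mc \is hermsymmx.
  apply: realsym_hermsym.
    apply/is_hermitianmxP; rewrite expr0 scale1r map_mx_id //.
    by rewrite /Mc map_trmx trmx_mul trmxK.
  by apply/mxOverP => i j; rewrite mxE; apply: cR_real.
exists (spectralmx Mc), (map_mx (@complex.Re R) (spectral_diag Mc)); split.
  exact: spectral_unitarymx.
have dr := hermitian_spectral_diag_real herm.
have -> : mc (map_mx (@complex.Re R) (spectral_diag Mc)) = spectral_diag Mc.
  apply/matrixP => i j; rewrite !mxE cR_Re //.
  by move/mxOverP: dr; apply.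
by apply/orthomx_spectralP; apply: hermitian_normalmx.
Qed.

Local Open Scope sesquilinear_scope.

Section Decomp.
Variables (n : nat) (A : 'M[R]_n) (P : 'M[C]_n) (d : 'rV[R]_n).
Hypothesis Pu : P \is unitarymx.
Hypothesis Pd : mc (A^T *m A) = invmx P *m diag_mx (mc d) *m P.

Lemma PtP : P^t* *m P = 1%:M.
Proof. by rewrite -invmx_unitary // mulVmx // unitarymx_unit. Qed.

Lemma PPt : P *m P^t* = 1%:M.
Proof. by apply/unitarymxP. Qed.

Lemma quad (x : 'rV[C]_n) :
  (x *m mc (A^T *m A) *m x^t*) 0 0 =
  \sum_j cR (d 0 j) * ((x *m P^t*) 0 j * ((x *m P^t*) 0 j)^*).
Proof.
rewrite Pd invmx_unitary // !mulmxA.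
have -> : x *m P^t* *m diag_mx (mc d) *m P *m x^t* =
   (x *m P^t*) *m diag_mx (mc d) *m (x *m P^t*)^t*.
  by rewrite -!mulmxA; congr (_ *m (_ *m _)); rewrite trmx_mul map_mxM trmxCK.
rewrite mxE; apply: eq_bigr => j _.
rewrite mul_mx_diag !mxE mulrA [_ * cR _]mulrC.
done.
Qed.


Lemma conj_mc m k (B : 'M[R]_(m, k)) : map_mx Num.conj (mc B) = mc B.
Proof. by apply/matrixP => i j; rewrite !mxE; exact: conjc_real. Qed.

Lemma tC_mc m k (B : 'M[R]_(m, k)) : (mc B)^t* = mc B^T.
Proof. by apply/matrixP => i j; rewrite !mxE; exact: conjc_real. Qed.

Lemma quad_ge0 (x : 'rV[C]_n) : 0 <= (x *m mc (A^T *m A) *m x^t*) 0 0.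
Proof.
set z := x *m (mc A)^T.
have -> : x *m mc (A^T *m A) *m x^t* = z *m z^t*.
  by rewrite /z map_mxM map_trmx !mulmxA trmx_mul map_mxM map_trmx trmxK conj_mc mulmxA.
rewrite mxE; apply: sumr_ge0 => k _; rewrite !mxE; exact: mul_conjC_ge0.
Qed.

Lemma d_ge0 j : 0 <= d 0 j.
Proof.
have := quad_ge0 (row j P); rewrite quad.
rewrite -row_mul PPt (bigD1 j) //= big1 ?addr0.
  by rewrite !mxE eqxx /= conjC1 !mulr1 -(rmorph0 cR) cR_le.
by move=> k kj; rewrite !mxE eq_sym (negbTE kj) /= conjC0 !mulr0.
Qed.

Lemma rayleigh (v : 'rV[R]_n) (lam : R) : (forall j, d 0 j <= lam) ->
  (v *m (A^T *m A) *m v^T) 0 0 <= lam * (v *m v^T) 0 0.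
Proof.
move=> hl; rewrite -cR_le rmorphM /=.
have e1 : cR ((v *m (A^T *m A) *m v^T) 0 0) = (mc v *m mc (A^T *m A) *m (mc v)^t*) 0 0.
  by rewrite tC_mc -!map_mxM [RHS]mxE.
have e2 : cR ((v *m v^T) 0 0) = (mc v *m P^t* *m (mc v *m P^t*)^t*) 0 0.
  rewrite trmx_mul map_mxM trmxCK !mulmxA -(mulmxA (mc v)) PtP mulmx1.
  by rewrite tC_mc -(map_mxM cR) [RHS]mxE.
rewrite e1 e2 quad mxE mulr_sumr; apply: ler_sum => j _.
rewrite !mxE; apply: ler_wpM2r; first exact: mul_conjC_ge0.
by rewrite cR_le.
Qed.

Lemma charM : char_poly (A^T *m A) = \prod_j ('X - (d 0 j)%:P).
Proof.
apply: (@map_poly_inj _ _ cR); rewrite map_char_poly Pd.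
rewrite char_poly_conj ?unitarymx_unit // char_poly_diag rmorph_prod.
by apply: eq_bigr => j _; rewrite mxE /= map_polyXsubC.
Qed.

Lemma trM : \tr (A^T *m A) = \sum_j d 0 j.
Proof.
apply: cR_inj; rewrite -trace_map_mx Pd mxtrace_mulC mulmxA mulmxV ?unitarymx_unit //.
by rewrite mul1mx mxtrace_diag rmorph_sum; apply: eq_bigr => j _; rewrite mxE.
Qed.

Lemma trM2 : \tr ((A^T *m A) *m (A^T *m A)) = \sum_j d 0 j ^+ 2.
Proof.
have Pi : P \in unitmx by rewrite unitarymx_unit.
apply: cR_inj; rewrite -trace_map_mx map_mxM Pd.
rewrite !mulmxA -[_ *m P *m invmx P]mulmxA mulmxV // mulmx1 -[_ *m diag_mx _ *m diag_mx _]mulmxA mulmx_diag.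
rewrite mxtrace_mulC mulmxA mulmxV // mul1mx mxtrace_diag rmorph_sum.
by apply: eq_bigr => j _; rewrite !mxE rmorphXn.
Qed.

Lemma sv_perm (s : 'I_n -> R) : is_singular_values A s ->
  perm_eq [seq s i ^+ 2 | i <- enum 'I_n] [seq d 0 j | j <- enum 'I_n].
Proof.
move=> [_ hs]; apply: prod_XsubC_eq; rewrite !big_map; exact: (etrans (esym hs) charM).
Qed.

End Decomp.

Section SV.
Variables (n : nat) (A : 'M[R]_n).
Local Notation s := (singvals A).

Lemma sv_spec : is_singular_values A s.
Proof.
rewrite /singvals; apply: epsilon_spec.
have [P [d [Pu Pd]]] := spec_decomp A.
exists (fun j => Num.sqrt (d 0 j)); split; first by move=> j; exact: sqrtr_ge0.
rewrite (charM Pu Pd); apply: eq_bigr => j _; rewrite sqr_sqrtr //.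
exact: (d_ge0 Pu Pd).
Qed.

Lemma sv_ge0 i : 0 <= s i.
Proof. by case: sv_spec. Qed.

Lemma spec_ge0 : 0 <= spec_norm A.
Proof. exact: bigmax_ge_id. Qed.

Lemma sv_le_spec i : s i <= spec_norm A.
Proof. exact: le_bigmax. Qed.

Lemma spec_le (x : R) : 0 <= x -> (forall i, s i <= x) -> spec_norm A <= x.
Proof. by move=> x0 h; apply: bigmax_le. Qed.

Lemma sv_sum2 : \sum_i s i ^+ 2 = \tr (A^T *m A).
Proof.
have [P [d [Pu Pd]]] := spec_decomp A.
have hp := sv_perm Pu Pd sv_spec.
rewrite (trM Pu Pd).
have e : \sum_(x <- [seq s i ^+ 2 | i <- enum 'I_n]) x =
         \sum_(x <- [seq d 0 j | j <- enum 'I_n]) x := perm_big _ hp.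
move: e; rewrite !big_map => e; exact: e.
Qed.

Lemma sv_sum4 : \sum_i s i ^+ 4 = \tr ((A^T *m A) *m (A^T *m A)).
Proof.
have [P [d [Pu Pd]]] := spec_decomp A.
have hp := sv_perm Pu Pd sv_spec.
rewrite (trM2 Pu Pd).
have e : \sum_(x <- [seq s i ^+ 2 | i <- enum 'I_n]) x ^+ 2 =
         \sum_(x <- [seq d 0 j | j <- enum 'I_n]) x ^+ 2 := perm_big _ hp.
move: e; rewrite !big_map => e.
rewrite -(eq_bigr _ (fun i _ => esym (exprM (s i) 2 2))); exact: e.
Qed.

Lemma sv_rayleigh (v : 'rV[R]_n) :
  (v *m (A^T *m A) *m v^T) 0 0 <= spec_norm A ^+ 2 * (v *m v^T) 0 0.
Proof.
have [P [d [Pu Pd]]] := spec_decomp A.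
have hp := sv_perm Pu Pd sv_spec.
apply: (rayleigh Pu Pd) => j.
have : d 0 j \in [seq s i ^+ 2 | i <- enum 'I_n].
  by rewrite (perm_mem hp); apply/mapP; exists j; rewrite ?mem_enum.
case/mapP => i _ ->; rewrite !expr2.
by apply: ler_pM; rewrite ?sv_ge0 ?sv_le_spec.
Qed.

Lemma sv_eigen i : eigenvalue (A^T *m A) (s i ^+ 2).
Proof.
rewrite eigenvalue_root_char.
have h : root (\prod_(x <- [seq s i ^+ 2 | i <- enum 'I_n]) ('X - x%:P)) (s i ^+ 2).
  by rewrite root_prod_XsubC; apply/mapP; exists i; rewrite ?mem_enum.
move: h; rewrite big_map enumT => h.
case: sv_spec => _ ->; exact: h.
Qed.

End SV.
End S.

Section Gen.
Variables (R : realType) (n : nat).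
Implicit Types (A B X : 'M[R]_n).

Lemma rowsq_ge0 A i : 0 <= (A *m A^T) i i.
Proof. rewrite mxE; apply: sumr_ge0 => k _; rewrite mxE -expr2; exact: sqr_ge0. Qed.

Lemma spec_lb A i : (A *m A^T) i i <= spec_norm A ^+ 2.
Proof.
set r := (A *m A^T) i i.
have h := sv_rayleigh A (row i A).
have e1 : (row i A *m (row i A)^T) 0 0 = r.
  by rewrite /r !mxE; apply: eq_bigr => k _; rewrite !mxE.
have e2 : r ^+ 2 <= (row i A *m (A^T *m A) *m (row i A)^T) 0 0.
  set w := row i A *m A^T.
  have -> : row i A *m (A^T *m A) *m (row i A)^T = w *m w^T.
    by rewrite /w !mulmxA trmx_mul trmxK mulmxA.
  have wi : w 0 i = r by rewrite /w -row_mul mxE.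
  rewrite mxE (bigD1 i) //= -wi !mxE expr2 lerDl.
  by apply: sumr_ge0 => k _; rewrite [w^T k 0]mxE -expr2 sqr_ge0.
rewrite e1 in h.
have r0 : 0 <= r by exact: rowsq_ge0.
case: (eqVneq r 0) => [->|rn0]; first exact: sqr_ge0.
have rp : 0 < r by rewrite lt_def rn0 r0.
rewrite -(ler_pM2r rp) -expr2; exact: le_trans e2 h.
Qed.

Lemma trmx_sym X : (X^T *m X)^T = X^T *m X.
Proof. by rewrite trmx_mul trmxK. Qed.

Lemma tr_sq_ge0 X : 0 <= \tr ((X^T *m X) *m (X^T *m X)).
Proof.
rewrite /mxtrace; apply: sumr_ge0 => i _; rewrite mxE; apply: sumr_ge0 => j _.
have -> : (X^T *m X) j i = (X^T *m X) i j.
  by rewrite -[in LHS]trmx_sym mxE.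
rewrite -expr2; exact: sqr_ge0.
Qed.

Lemma s4_bound X (e : 'rV[R]_n) (c : R) : 0 <= c ->
  (forall i, e 0 i ^+ 2 <= c ^+ 2) ->
  schatten4 (X *m diag_mx e) <= c * schatten4 X.
Proof.
move=> c0 he; rewrite /schatten4 !sv_sum4.
set M := X^T *m X.
have Msym : forall i j, M j i = M i j by move=> i j; rewrite /M -[in LHS]trmx_sym mxE.
have -> : (X *m diag_mx e)^T *m (X *m diag_mx e) = diag_mx e *m M *m diag_mx e.
  by rewrite trmx_mul tr_diag_mx !mulmxA.
have t0 : 0 <= \tr (M *m M) by exact: tr_sq_ge0.
clearbody M.
have le1 : \tr ((diag_mx e *m M *m diag_mx e) *m (diag_mx e *m M *m diag_mx e))
    <= c ^+ 4 * \tr (M *m M).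
  rewrite /mxtrace mulr_sumr; apply: ler_sum => i _.
  rewrite !mxE mulr_sumr; apply: ler_sum => j _.
  rewrite !mul_mx_diag !mul_diag_mx !mxE (Msym i j).
  have hi := he i; have hj := he j.
  have hM : 0 <= M i j ^+ 2 by exact: sqr_ge0.
  have -> : e 0 i * M i j * e 0 j * (e 0 j * M i j * e 0 i) =
            (e 0 i ^+ 2 * e 0 j ^+ 2) * M i j ^+ 2 by ring.
  have -> : c ^+ 4 * (M i j * M i j) = (c ^+ 2 * c ^+ 2) * M i j ^+ 2 by ring.
  apply: ler_wpM2r => //; apply: ler_pM => //; exact: sqr_ge0.
have c4 : Num.sqrt (Num.sqrt (c ^+ 4)) = c.
  by rewrite (_ : c ^+ 4 = (c ^+ 2) ^+ 2) ?sqrtr_sqr ?ger0_norm ?sqrtr_sqr ?ger0_norm // ?sqr_ge0 // -exprM.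
apply: (@le_trans _ _ (Num.sqrt (Num.sqrt (c ^+ 4 * \tr (M *m M))))).
  by rewrite ler_sqrt ?sqrtr_ge0 // ler_sqrt // mulr_ge0 // exprn_ge0.
by rewrite sqrtrM ?exprn_ge0 // sqrtrM ?sqrtr_ge0 // c4.
Qed.


Lemma cs_unit A i j : (A *m A^T) i i = 1 -> (A *m A^T) j j = 1 ->
  `|(A *m A^T) i j| <= 1.
Proof.
move=> hi hj.
have e1 : \sum_k (A i k - A j k) ^+ 2 = (A *m A^T) i i + (A *m A^T) j j - 2 * (A *m A^T) i j.
  rewrite !mxE mulr_sumr -big_split -sumrB /=; apply: eq_bigr => k _; rewrite !mxE; ring.
have e2 : \sum_k (A i k + A j k) ^+ 2 = (A *m A^T) i i + (A *m A^T) j j + 2 * (A *m A^T) i j.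
  rewrite !mxE mulr_sumr -!big_split /=; apply: eq_bigr => k _; rewrite !mxE; ring.
have p1 : 0 <= \sum_k (A i k - A j k) ^+ 2 by apply: sumr_ge0 => k _; exact: sqr_ge0.
have p2 : 0 <= \sum_k (A i k + A j k) ^+ 2 by apply: sumr_ge0 => k _; exact: sqr_ge0.
rewrite e1 hi hj in p1; rewrite e2 hi hj in p2.
rewrite ler_norml; apply/andP; split; lra.
Qed.

Lemma gersh A (S : 'I_n -> {set 'I_n}) (K : nat) :
  (forall i j, `|(A *m A^T) i j| <= 1) ->
  (forall i j, j \notin S i -> (A *m A^T) i j = 0) ->
  (forall i, (#|S i| <= K)%N) ->
  forall i, singvals A i ^+ 2 <= K%:R.
Proof.
move=> h1 h0 hK i.
set lam := singvals A i ^+ 2.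
have lam0 : 0 <= lam by exact: sqr_ge0.
have /eigenvalueP [v hv vn0] := sv_eigen A i.
set w := v *m A^T.
have Msym : forall a b, (A *m A^T) b a = (A *m A^T) a b.
  by move=> a b; rewrite -[in LHS](trmxK A) -[in LHS]trmx_mul -[A^T^T]trmxK trmxK mxE trmxK.
case: (eqVneq w 0) => [w0|wn0].
  have : lam *: v = 0 by rewrite -hv mulmxA -/w w0 mul0mx.
  move/eqP; rewrite scalemx_eq0 (negbTE vn0) orbF => /eqP ->; exact: ler0n.
have hw : w *m (A *m A^T) = lam *: w.
  by rewrite /w mulmxA -(mulmxA v) hv -scalemxAl.
clearbody w.
have [j0 _ hm] := @eq_bigmax _ _ _ (0:R) i predT (fun j => `|w 0 j|) isT (fun j _ => normr_ge0 _).
have hmax : forall j, `|w 0 j| <= `|w 0 j0|.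
  by move=> j; rewrite -hm; apply: le_bigmax_cond.
have mpos : 0 < `|w 0 j0|.
  rewrite lt_def normr_ge0 andbT normr_eq0; apply/eqP => wj0.
  move/eqP: wn0; apply; apply/rowP => j; rewrite mxE; apply/eqP.
  rewrite -normr_eq0 eq_le normr_ge0 andbT.
  by have := hmax j; rewrite wj0 normr0.
have e : lam * w 0 j0 = \sum_k w 0 k * (A *m A^T) k j0.
  move/rowP/(_ j0): (hw); rewrite mxE => ->; by rewrite mxE.
have : lam * `|w 0 j0| <= K%:R * `|w 0 j0|.
  rewrite -(ger0_norm lam0) -normrM e.
  apply: (le_trans (ler_norm_sum _ _ _)).
  apply: (@le_trans _ _ (\sum_k (if k \in S j0 then `|w 0 j0| else 0))).
    apply: ler_sum => k _; rewrite normrM Msym.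
    case: ifP => hk.
      rewrite -[X in _ <= X]mulr1; apply: ler_pM => //; exact: normr_ge0.
    by rewrite h0 ?hk // normr0 mulr0.
  rewrite -big_mkcond sumr_const -[_ *+ #|_|]mulr_natl.
  by apply: ler_wpM2r; [exact: normr_ge0 | rewrite ler_nat].
by rewrite ler_pM2r.
Qed.

Lemma invmxM A B : A \in unitmx -> B \in unitmx ->
  invmx (A *m B) = invmx B *m invmx A.
Proof.
move=> Au Bu; have ABu : A *m B \in unitmx by rewrite unitmx_mul Au.
have h : invmx B *m invmx A *m (A *m B) = 1%:M.
  by rewrite -!mulmxA (mulmxA (invmx A)) mulVmx // mul1mx mulVmx.
by rewrite -[RHS]mulmx1 -(mulmxV ABu) mulmxA h mul1mx.
Qed.

Lemma diag_unit (g : 'rV[R]_n) : (forall i, g 0 i != 0) -> diag_mx g \in unitmx.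
Proof.
by move=> h; rewrite unitmxE det_diag unitfE; apply/prodf_neq0 => i _.
Qed.

Lemma invmx_diag (g : 'rV[R]_n) : (forall i, g 0 i != 0) ->
  invmx (diag_mx g) = diag_mx (\row_i (g 0 i)^-1).
Proof.
move=> h; have gu := diag_unit h.
have e : diag_mx g *m diag_mx (\row_i (g 0 i)^-1) = 1%:M.
  rewrite mulmx_diag; apply/matrixP => a b; rewrite !mxE.
  by case: eqP => [->|]; rewrite ?mulfV ?mulr1n ?mulr0n.
by rewrite -[LHS]mulmx1 -e mulmxA mulVmx // mul1mx.
Qed.

End Gen.

Section Main.
Variables (R : realType) (n : nat) (L : 'M[R]_n).
Hypothesis Lu : L \in unitmx.

Lemma dl_entry (g : 'rV[R]_n) a b :
  ((diag_mx g *m L) *m (diag_mx g *m L)^T) a b = g 0 a * (L *m L^T) a b * g 0 b.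
Proof.
rewrite trmx_mul tr_diag_mx !mulmxA -(mulmxA (diag_mx g)).
rewrite mul_mx_diag mxE mul_diag_mx mxE; done.
Qed.

Lemma Cii_pos i : 0 < (L *m L^T) i i.
Proof.
rewrite lt_def rowsq_ge0 andbT; apply/eqP => h0.
have hz : forall k, L i k = 0.
  move=> k; move: h0; rewrite mxE => /psumr_eq0P h.
  have := h (fun j _ => ltac:(by rewrite mxE -expr2 sqr_ge0)) k isT.
  by rewrite mxE -expr2 => /eqP; rewrite sqrf_eq0 => /eqP.
have : row i (L *m invmx L) = row i 1%:M by rewrite mulmxV.
rewrite row_mul (_ : row i L = 0) ?mul0mx; last by apply/rowP => k; rewrite !mxE hz.
move/rowP/(_ i); rewrite !mxE eqxx /=; move/eqP; rewrite eq_sym oner_eq0 //.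
Qed.


Local Notation C := (L *m L^T).
Local Notation del := (\row_i Num.sqrt (C i i)).

Lemma del_pos i : 0 < del 0 i.
Proof. by rewrite mxE sqrtr_gt0 Cii_pos. Qed.

Lemma del_neq0 i : del 0 i != 0.
Proof. by rewrite gt_eqF // del_pos. Qed.

Lemma del_sq i : del 0 i ^+ 2 = C i i.
Proof. by rewrite mxE sqr_sqrtr // ltW // Cii_pos. Qed.

Lemma invD : invmx (diag_mx del) = diag_mx (\row_i (del 0 i)^-1).
Proof. exact: invmx_diag del_neq0. Qed.

Lemma BBt a b : ((invmx (diag_mx del) *m L) *m (invmx (diag_mx del) *m L)^T) a b
   = (del 0 a)^-1 * C a b * (del 0 b)^-1.
Proof. by rewrite invD dl_entry !mxE. Qed.

Lemma BBt_ii i : ((invmx (diag_mx del) *m L) *m (invmx (diag_mx del) *m L)^T) i i = 1.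
Proof.
rewrite BBt -del_sq; have h := del_neq0 i; field; done.
Qed.

Lemma kappa_key (g : 'rV[R]_n) : (forall i, g 0 i != 0) ->
  kappa (invmx (diag_mx del) *m L) <=
  spec_norm (invmx (diag_mx del) *m L) * kappa (invmx (diag_mx g) *m L).
Proof.
move=> hg.
set B := invmx (diag_mx del) *m L.
set AG := invmx (diag_mx g) *m L.
have Du : diag_mx del \in unitmx by exact: diag_unit del_neq0.
have Gu : diag_mx g \in unitmx by exact: diag_unit hg.
have iB : invmx B = invmx L *m diag_mx del.
  by rewrite /B invmxM ?unitmx_inv // invmxK.
have iA : invmx AG = invmx L *m diag_mx g.
  by rewrite /AG invmxM ?unitmx_inv // invmxK.
set e := \row_i ((g 0 i)^-1 * del 0 i).
have iBe : invmx B = invmx AG *m diag_mx e.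
  rewrite iB iA -mulmxA mulmx_diag; congr (_ *m diag_mx _).
  by apply/rowP => i; rewrite !mxE mulrA mulfV ?mul1r.
have he : forall i, e 0 i ^+ 2 <= spec_norm AG ^+ 2.
  move=> i; apply: le_trans (spec_lb AG i).
  rewrite /AG invmx_diag // dl_entry.
  rewrite (_ : e 0 i = (g 0 i)^-1 * del 0 i); last by rewrite !mxE.
  rewrite (_ : (\row_i0 (g 0 i0)^-1) 0 i = (g 0 i)^-1); last by rewrite !mxE.
  by rewrite exprMn del_sq expr2 mulrAC.
have hs := s4_bound (invmx AG) (spec_ge0 AG) he.
rewrite /kappa iBe; apply: ler_wpM2l; first exact: spec_ge0.
exact: hs.
Qed.


Lemma sv_sq_le_sqrt (A : 'M[R]_n) (x : R) : 0 <= x ->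
  (forall i, singvals A i ^+ 2 <= x) -> spec_norm A <= Num.sqrt x.
Proof.
move=> x0 h; apply: spec_le; first exact: sqrtr_ge0.
by move=> i; rewrite -(ger0_norm (sv_ge0 A i)) -sqrtr_sqr ler_sqrt.
Qed.

Lemma specB_N : spec_norm (invmx (diag_mx del) *m L) <= Num.sqrt n%:R.
Proof.
apply: sv_sq_le_sqrt; first exact: ler0n.
move=> i; set B := invmx (diag_mx del) *m L.
have hs : \sum_j singvals B j ^+ 2 = n%:R.
  rewrite sv_sum2 mxtrace_mulC /mxtrace.
  rewrite (eq_bigr (fun _ => (1:R))); last by move=> j _; rewrite /B BBt_ii.
  by rewrite sumr_const card_ord.
rewrite -hs (bigD1 i) //= lerDl; apply: sumr_ge0 => j _; exact: sqr_ge0.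
Qed.

Lemma specB_K (K : nat) : (forall i, (#|[set j | C i j != 0%R]| <= K)%N) ->
  spec_norm (invmx (diag_mx del) *m L) <= Num.sqrt K%:R.
Proof.
move=> hK; apply: sv_sq_le_sqrt; first exact: ler0n.
apply: (gersh (S := fun a => [set b | C a b != 0])) => //.
  by move=> i j; apply: cs_unit; apply: BBt_ii.
by move=> i j; rewrite inE negbK => /eqP h; rewrite BBt h mulr0 mul0r.
Qed.

End Main.

Theorem proposition2 (R : realType) (N : nat) (L Dopt : 'M[R]_N) :
  L \in unitmx ->
  inv_diag Dopt ->
  (forall G : 'M[R]_N, inv_diag G ->
     kappa (invmx Dopt *m L) <= kappa (invmx G *m L)) ->
  let C := L *m L^T in
  let D := diag_mx (\row_i Num.sqrt (C i i)) in
  kappa (invmx D *m L) <= Num.sqrt (N%:R) * kappa (invmx Dopt *m L) /\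
  (forall K : nat,
     (forall i : 'I_N, (#|[set j | C i j != 0%R]| <= K)%N) ->
     kappa (invmx D *m L) <= Num.sqrt (K%:R) * kappa (invmx Dopt *m L)).
Proof.
move=> Lu [g [-> hg]] _ C D; rewrite /D /C.
have k1 := kappa_key Lu hg.
have kg : 0 <= kappa (invmx (diag_mx g) *m L).
  by rewrite /kappa mulr_ge0 ?spec_ge0 ?sqrtr_ge0.
split.
  apply: (le_trans k1); apply: ler_wpM2r => //; exact: specB_N.
move=> K hK; apply: (le_trans k1); apply: ler_wpM2r => //; exact: specB_K.
Qed.
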